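(* Suppose $X$ and $Y$ are independent real random variables, where $X$ has a symmetric, unimodal density. Then $\mathrm{MAD}(X)\le\mathrm{MAD}(X+Y)$.
   Context: For a random variable $Z$, $\mathrm{med}(Z)$ denotes its median and the median absolute deviation is $\mathrm{MAD}(Z)=\mathrm{med}\big(|Z-\mathrm{med}(Z)|\big)$. *)

(* Defs.v *)
From HB Require Import structures.
From mathcomp Require Import all_boot all_order all_algebra.
From mathcomp Require Import all_classical all_reals all_analysis.
Set Implicit Arguments. Unset Strict Implicit. Unset Printing Implicit Defensive.
Import Order.TTheory GRing.Theory Num.Theory.
Import numFieldNormedType.Exports.
Local Open Scope classical_set_scope.
Local Open Scope ring_scope.

Definition indep_rv d (T : measurableType d) (R : realType) (P : probability T R)
  (X Y : T -> R) : Prop :=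
  forall A B : set R, measurable A -> measurable B ->
    P (X @^-1` A `&` Y @^-1` B) = (P (X @^-1` A) * P (Y @^-1` B))%E.

Definition has_density d (T : measurableType d) (R : realType) (P : probability T R)
  (X : T -> R) (f : R -> R) : Prop :=
  (forall x, 0 <= f x) /\ measurable_fun setT f /\
  forall A : set R, measurable A ->
    P (X @^-1` A) = (\int[@lebesgue_measure R]_(x in A) (f x)%:E)%E.

Definition symmetric_unimodal (R : realType) (f : R -> R) : Prop :=
  exists c : R,
    (forall x, f (c + x) = f (c - x)) /\
    (forall x y, x <= y -> y <= c -> f x <= f y) /\
    (forall x y, c <= x -> x <= y -> f y <= f x).

Definition is_median d (T : measurableType d) (R : realType) (P : probability T R)
  (Z : T -> R) (m : R) : Prop :=
  lee ((2:R)^-1)%:E (P [set w | Z w <= m]) /\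
  lee ((2:R)^-1)%:E (P [set w | m <= Z w]).

Definition is_MAD d (T : measurableType d) (R : realType) (P : probability T R)
  (Z : T -> R) (a : R) : Prop :=
  exists m, is_median P Z m /\ is_median P (fun w => `|Z w - m|) a.

(* Main.v *)
Require Import Defs.
From HB Require Import structures.
From mathcomp Require Import all_boot all_order all_algebra.
From mathcomp Require Import all_classical all_reals all_analysis.
Import Order.TTheory GRing.Theory Num.Theory.
Local Open Scope classical_set_scope.
Local Open Scope ring_scope.
Set Warnings "-notation-overridden,-ambiguous-paths,-notation-incompatible-prefix".
From mathcomp Require Import lra.
Section refl.
Context (R : realType) (c : R).
Definition refl (x : R) : R := 2 * c - x.

Lemma measurable_refl : measurable_fun setT refl.
Proof.
have -> : refl = (cst (2 * c)) \+ -%R by apply/funext => x.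
apply: measurable_realfun.measurable_funD; first exact: measurable_cst.
exact: measurable_realfun.oppr_measurable.
Qed.

Definition reflm : set (measurableTypeR R) -> \bar R :=
  pushforward (@lebesgue_measure R) (refl : measurableTypeR R -> measurableTypeR R).

Let reflm0 : reflm set0 = 0%E.
Proof. by rewrite /reflm /pushforward preimage_set0 measure0. Qed.

Let reflm_ge0 A : (0 <= reflm A)%E.
Proof. rewrite /reflm /pushforward; exact: measure_ge0. Qed.

Let reflm_sa : semi_sigma_additive reflm.
Proof.
rewrite /semi_sigma_additive => F mF tF mUF; rewrite /reflm /pushforward preimage_bigcup.
apply: measure_semi_sigma_additive.
- by move=> n; rewrite -[X in measurable X]setTI; exact: (measurable_refl measurableT _ (mF n)).
- apply/trivIsetP => /= i j _ _ ij; rewrite -preimage_setI.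
  by move/trivIsetP : tF => /(_ _ _ _ _ ij) ->//; rewrite preimage_set0.
- by rewrite -preimage_bigcup -[X in measurable X]setTI; exact: (measurable_refl measurableT _ mUF).
Qed.

HB.instance Definition _ := isMeasure.Build _ _ _ reflm reflm0 reflm_ge0 reflm_sa.

Lemma leb_refl (A : set R) : measurable A ->
  lebesgue_measure A = lebesgue_measure (refl @^-1` A).
Proof.
move=> mA.
have := @lebesgue_measure_unique R reflm _ A mA; apply.
move=> X /ocitvP [->|[x x12 ->]].
  by rewrite !measure0.
transitivity (lebesgue_measure (refl @^-1` `]x.1, x.2]%classic)); last by [].
have -> : refl @^-1` `]x.1, x.2] = `[2 * c - x.2, 2 * c - x.1[%classic.
  apply/seteqP; split => y /=; rewrite !in_itv /= /refl => /andP [h1 h2];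
    apply/andP; split; lra.
rewrite !lebesgue_measure_itv /= !lte_fin x12.
have -> : 2 * c - x.2 < 2 * c - x.1 by lra.
by rewrite -!EFinD; congr (_%:E); lra.
Qed.
End refl.
Arguments refl {R} c x.
Arguments reflm {R} c.
Arguments measurable_refl {R} c.
Arguments leb_refl {R} c.

Lemma lam_eq (R : realType) b1 b2 (x y : R) : x <= y ->
  lebesgue_measure [set` Interval (BSide b1 x) (BSide b2 y)] = (y - x)%:E.
Proof.
move=> xy; rewrite lebesgue_measure_itv /= lte_fin.
case: ifPn => [_|]; first by rewrite EFinB.
rewrite -leNgt => yx; have -> : y = x by apply/le_anti/andP.
by rewrite subrr.
Qed.

Lemma P_cmp_gen d (T : measurableType d) (R : realType) (P : probability T R)
  (A C S1 S2 : set T) : measurable A -> measurable C -> measurable S1 ->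
  measurable S2 -> A `<=` C `|` S1 -> S2 `<=` C -> S2 `&` A = set0 ->
  (P S1 <= P S2)%E -> (P A <= P C)%E.
Proof.
move=> mA mC mS1 mS2 AC S2C S2A S12.
have mAC : measurable (A `&` C) by exact: measurableI.
apply: (@le_trans _ _ (P (A `&` C `|` S2))); last first.
  apply: le_measure; rewrite ?inE//; first exact: measurableU.
  by move=> x [[]|/S2C].
rewrite measureU//; last first.
  rewrite -subset0 => x [[Ax _] S2x].
  by have : (S2 `&` A) x by []; rewrite S2A.
apply: (@le_trans _ _ (P (A `&` C `|` S1))).
  apply: le_measure; rewrite ?inE//; first exact: measurableU.
  by move=> x Ax; case: (AC x Ax) => [Cx|S1x]; [left|right].
apply: le_trans (measureU2 _ _ _) _ => //.
by rewrite leeD2l.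
Qed.

Lemma three d (T : measurableType d) (R : realType) (P : probability T R)
  (A B C : set T) : measurable A -> measurable B -> measurable C ->
  A `&` B = set0 -> (A `|` B) `&` C = set0 ->
  ((2:R)^-1%:E <= P A)%E -> ((2:R)^-1%:E <= P C)%E -> (P B <= 0)%E.
Proof.
move=> mA mB mC AB ABC hA hC.
have mAB : measurable (A `|` B) by exact: measurableU.
have := probability_le1 P (measurableU _ _ mAB mC).
rewrite !measureU// => h4.
have h4' : (P A + P B + P C <= 1)%E := h4.
have fA := fin_num_measure P A mA; have fB := fin_num_measure P B mB.
have fC := fin_num_measure P C mC.
have gB : (0 <= P B)%E by exact: measure_ge0.
move: hA hC gB h4'; rewrite -(fineK fA) -(fineK fB) -(fineK fC) -!EFinD !lee_fin.
move=> *; lra.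
Qed.

Section cells.
Context (R : realType) (e : R) (e0 : 0 < e).

Definition cellN (y : R) : nat := ((y < 0)%R + (Num.trunc (`|y| / e)).*2)%N.
Definition cell_lo (n : nat) : R :=
  if odd n then - ((n./2).+1%:R * e) else (n./2)%:R * e.

Lemma trunc_bnd z : 0 <= z ->
  (Num.trunc (z / e))%:R * e <= z < (Num.trunc (z / e)).+1%:R * e.
Proof.
move=> z0; have t0 : 0 <= z / e by rewrite divr_ge0 // ltW.
have /andP[h1 h2] := truncn_itv t0; move: h1 h2; set k := Num.trunc _.
set t := z / e => h1 h2.
have -> : z = t * e by rewrite /t divfK // gt_eqF.
by rewrite ler_pM2r // ltr_pM2r // h1 h2.
Qed.

Lemma trunc_eq z k : 0 <= z -> k%:R * e <= z < k.+1%:R * e -> Num.trunc (z / e) = k.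
Proof.
move=> z0 /andP[h1 h2]; apply: truncn_def.
set t := z / e.
have ez : z = t * e by rewrite /t divfK // gt_eqF.
by rewrite ez ler_pM2r // ltr_pM2r // in h1 h2; rewrite h1 h2.
Qed.

Lemma cellN_half y : (cellN y)./2 = Num.trunc (`|y| / e).
Proof. by rewrite /cellN half_bit_double. Qed.

Lemma cellN_odd y : odd (cellN y) = (y < 0).
Proof. by rewrite /cellN oddD odd_double addbF; case: (y < 0). Qed.

Lemma cell_bnd y : cell_lo (cellN y) <= y <= cell_lo (cellN y) + e.
Proof.
rewrite /cell_lo cellN_odd cellN_half.
have := (@trunc_bnd `|y| (normr_ge0 y)); set k := Num.trunc _ => /andP[h1 h2].
case: ltP => y0.
  rewrite ltr0_norm // in h1 h2; apply/andP; split; lra.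
rewrite ger0_norm // in h1 h2; apply/andP; split; lra.
Qed.

Lemma cell_meas n : measurable [set y | cellN y = n].
Proof.
set k := n./2.
have [on|en] := boolP (odd n).
- have -> : [set y | cellN y = n] =
      `](- (k.+1%:R * e))%R, (- (k%:R * e))%R] `&` `]-oo, 0[.
    apply/seteqP; split => y /=.
      move=> yn; rewrite !in_itv /=.
      have y0 : y < 0 by rewrite -cellN_odd yn.
      have hk : k = Num.trunc (`|y| / e) by rewrite /k -yn cellN_half.
      have := (@trunc_bnd `|y| (normr_ge0 y)); rewrite -hk ltr0_norm // => /andP[h3 h4].
      split=> //; apply/andP; split; lra.
    move=> -[]; rewrite !in_itv /= => /andP[h1 h2] y0.
    rewrite /cellN y0 (@trunc_eq _ k); first by rewrite -(odd_double_half n) on.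
    - exact: normr_ge0.
    - rewrite ltr0_norm //; apply/andP; split; lra.
  by apply: measurableI; exact: measurable_itv.
- have -> : [set y | cellN y = n] = `[(k%:R * e)%R, (k.+1%:R * e)%R[%classic.
    apply/seteqP; split => y /=.
      move=> yn; rewrite !in_itv /=.
      have y0 : 0 <= y by rewrite leNgt -cellN_odd yn (negbTE en).
      have hk : k = Num.trunc (`|y| / e) by rewrite /k -yn cellN_half.
      by have := (@trunc_bnd `|y| (normr_ge0 y)); rewrite -hk ger0_norm.
    rewrite !in_itv /= => /andP[h1 h2].
    have y0 : 0 <= y by apply: le_trans h1; rewrite mulr_ge0 // ltW.
    rewrite /cellN ltNge y0 /= (@trunc_eq _ k); first by rewrite -(odd_double_half n) (negbTE en).
    - exact: normr_ge0.
    - by rewrite ger0_norm //; apply/andP; split.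
  exact: measurable_itv.
Qed.
End cells.
Arguments cellN {R} e y.
Arguments cell_lo {R} e n.
Arguments cell_bnd {R e} e0 y.
Arguments cell_meas {R e} e0 n.

Section dens.
Context d (T : measurableType d) (R : realType) (P : probability T R)
  (X : {RV P >-> R}) (f : R -> R) (c : R).
Hypotheses (f0 : forall x, 0 <= f x) (mf : measurable_fun setT f)
  (hd : forall A : set R, measurable A ->
    P (X @^-1` A) = (\int[@lebesgue_measure R]_(x in A) (f x)%:E)%E)
  (fsym : forall x, f (c + x) = f (c - x))
  (fup : forall x y, x <= y -> y <= c -> f x <= f y)
  (fdn : forall x y, c <= x -> x <= y -> f y <= f x).

Lemma frefl x : f (refl c x) = f x.
Proof.
have := fsym (x - c); rewrite /refl.
have -> : c + (x - c) = x by lra.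
by have -> : c - (x - c) = 2 * c - x by lra.
Qed.

Lemma PX_refl (A : set R) : measurable A ->
  P (X @^-1` A) = P (X @^-1` (refl c @^-1` A)).
Proof.
move=> mA.
have mA' : measurable (refl c @^-1` A).
  by rewrite -[X in measurable X]setTI; exact: (measurable_refl c measurableT _ mA).
rewrite !hd //.
transitivity (\int[reflm c]_(x in A) (f x)%:E)%E.
  apply: eq_measure_integral => B mB _; exact: leb_refl.
rewrite ge0_integral_pushforward //.
- by apply: eq_integral => x _ /=; rewrite frefl.
- exact: measurable_refl.
all: try by move=> y _; rewrite lee_fin.
by apply/measurable_realfun.measurable_EFinP; exact: measurable_funTS.
Qed.

Lemma PX_up (S : set R) (M : R) : measurable S -> 0 <= M ->
  (forall x, S x -> f x <= M) ->
  (P (X @^-1` S) <= M%:E * lebesgue_measure S)%E.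
Proof.
move=> mS M0 hS; rewrite hd // -integral_cst //.
apply: ge0_le_integral => //.
all: try (by move=> x _; rewrite lee_fin).
all: try (by apply/measurable_realfun.measurable_EFinP; exact: measurable_funTS).
all: try (by move=> x Sx; rewrite lee_fin hS).
all: try (by apply/measurable_realfun.measurable_EFinP; exact: measurable_cst).
Qed.

Lemma PX_lo (S : set R) (M : R) : measurable S -> 0 <= M ->
  (forall x, S x -> M <= f x) ->
  (M%:E * lebesgue_measure S <= P (X @^-1` S))%E.
Proof.
move=> mS M0 hS; rewrite hd // -integral_cst //.
apply: ge0_le_integral => //.
all: try (by move=> x _; rewrite lee_fin).
all: try (by apply/measurable_realfun.measurable_EFinP; exact: measurable_funTS).
all: try (by move=> x Sx; rewrite lee_fin hS).
all: try (by apply/measurable_realfun.measurable_EFinP; exact: measurable_cst).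
Qed.

Lemma PX_cmp (A C S1 S2 : set R) (M : R) : measurable A -> measurable C ->
  measurable S1 -> measurable S2 ->
  A `<=` C `|` S1 -> S2 `<=` C -> S2 `&` A = set0 ->
  (lebesgue_measure S1 <= lebesgue_measure S2)%E -> 0 <= M ->
  (forall x, S1 x -> f x <= M) -> (forall x, S2 x -> M <= f x) ->
  (P (X @^-1` A) <= P (X @^-1` C))%E.
Proof.
move=> mA mC mS1 mS2 AC S2C S2A l12 M0 h1 h2.
apply: (@P_cmp_gen _ _ _ P (X @^-1` A) (X @^-1` C) (X @^-1` S1) (X @^-1` S2));
  try exact: measurable_funPTI.
- by move=> w /AC.
- by move=> w /S2C.
- by rewrite -preimage_setI S2A preimage_set0.
apply: le_trans (@PX_up S1 M mS1 M0 h1) _.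
apply: le_trans (@PX_lo S2 M mS2 M0 h2).
by apply: lee_wpmul2l; rewrite ?lee_fin.
Qed.

Lemma and_left u s : 0 <= s -> u + s <= c ->
  (P (X @^-1` `[u, (u + 2 * s)%R]) <= P (X @^-1` `[(c - s)%R, (c + s)%R]))%E.
Proof.
move=> s0 us.
have [h|h] := ltP (u + 2 * s) (c - s).
- apply: (@PX_cmp `[u, u + 2 * s] `[c - s, c + s] `[u, u + 2 * s] `[c - s, c + s]
     (f (u + 2 * s))); try exact: measurable_itv.
  + by move=> x Ax; right.
  + by [].
  + by rewrite -subset0 => x [] /=; rewrite !in_itv /= => /andP[? ?] /andP[? ?]; lra.
  + by rewrite !lam_eq; [rewrite lee_fin; lra| lra | lra].
  + exact: f0.
  + by move=> x /=; rewrite in_itv /= => /andP[? ?]; apply: fup; lra.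
  + move=> x /=; rewrite in_itv /= => /andP[? ?].
    have [xc|xc] := leP x c; first by apply: fup; lra.
    apply: (@le_trans _ _ (f (c - s))); first by apply: fup; lra.
    rewrite -fsym; apply: fdn; lra.
- apply: (@PX_cmp `[u, u + 2 * s] `[c - s, c + s] `[u, c - s[ `]u + 2 * s, c + s]
     (f (c - s))); try exact: measurable_itv.
  + move=> x /=; rewrite !in_itv /= => /andP[? ?].
    have [xc|xc] := ltP x (c - s); [right|left]; rewrite /= ?in_itv /= ?andbT; try (apply/andP; split); lra.
  + by move=> x /=; rewrite !in_itv /= => /andP[? ?]; apply/andP; split; lra.
  + by rewrite -subset0 => x [] /=; rewrite !in_itv /= => /andP[? ?] /andP[? ?]; lra.
  + by rewrite !lam_eq; [rewrite lee_fin; lra| lra | lra].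
  + exact: f0.
  + by move=> x /=; rewrite in_itv /= => /andP[? ?]; apply: fup; lra.
  + move=> x /=; rewrite in_itv /= => /andP[? ?].
    have [xc|xc] := leP x c; first by apply: fup; lra.
    rewrite -fsym; apply: fdn; lra.
Qed.

Lemma anderson u s : 0 <= s ->
  (P (X @^-1` `[u, (u + 2 * s)%R]) <= P (X @^-1` `[(c - s)%R, (c + s)%R]))%E.
Proof.
move=> s0; have [us|us] := leP (u + s) c; first exact: and_left.
rewrite PX_refl; last exact: measurable_itv.
have -> : refl c @^-1` `[u, u + 2 * s] =
    `[2 * c - u - 2 * s, (2 * c - u - 2 * s) + 2 * s]%classic.
  apply/seteqP; split => x /=; rewrite !in_itv /= /refl => /andP[? ?];
    apply/andP; split; lra.
apply: and_left => //; lra.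
Qed.

Lemma med_c m : m < c -> ((2:R)^-1%:E <= P (X @^-1` `]-oo, m]))%E -> False.
Proof.
move=> mc hA.
have hC : ((2:R)^-1%:E <= P (X @^-1` `[(2 * c - m)%R, +oo[))%E.
  rewrite PX_refl; last exact: measurable_itv.
  suff -> : refl c @^-1` `[(2 * c - m)%R, +oo[ = `]-oo, m]%classic by [].
  apply/seteqP; split => x /=; rewrite !in_itv /= ?andbT /refl => ?; lra.
have hB : (P (X @^-1` `]m, (2 * c - m)%R[) <= 0)%E.
  apply: (@three _ _ _ P _ _ _ (measurable_funPTI X (measurable_itv `]-oo, m]))
    (measurable_funPTI X (measurable_itv `]m, (2 * c - m)%R[))
    (measurable_funPTI X (measurable_itv `[(2 * c - m)%R, +oo[)) _ _ hA hC).
  - rewrite -preimage_setI -subset0 => w [] /=; rewrite !in_itv /= => ? /andP[? ?]; lra.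
  - rewrite -preimage_setU -preimage_setI -subset0 => w [] /= [];
      rewrite !in_itv /= ?andbT => ?; try move/andP => [? ?]; lra.
have fm0 : f m <= 0.
  have := @PX_lo `]m, (2 * c - m)%R[ (f m) (measurable_itv _) (f0 m).
  have /[swap]/[apply] : forall x, `]m, (2 * c - m)%R[%classic x -> f m <= f x.
    move=> x /=; rewrite in_itv /= => /andP[? ?].
    have [xc|xc] := leP x c; first by apply: fup; lra.
    rewrite -[X in X <= _]frefl /refl; apply: fdn; lra.
  move=> h; have := le_trans h hB.
  rewrite lam_eq; last lra.
  rewrite -EFinM lee_fin => h2.
  have : 0 < 2 * c - m - m by lra.
  move=> hp; nra.
have fm : f m = 0 by apply/le_anti; rewrite fm0 f0.
have := @PX_up `]-oo, m] (f m) (measurable_itv _) (f0 m).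
have /[swap]/[apply] : forall x, `]-oo, m]%classic x -> f x <= f m.
  by move=> x /=; rewrite in_itv /= => ?; apply: fup; lra.
rewrite fm mul0e => h.
have := le_trans hA h; rewrite lee_fin; lra.
Qed.

Lemma median_c m : is_median P X m -> m = c.
Proof.
case=> h1 h2.
have [mc|mc|//] := ltgtP m c.
- exfalso; apply: (@med_c m mc).
  suff <- : [set w | X w <= m] = X @^-1` `]-oo, m] by [].
  by apply/seteqP; split => w /=; rewrite in_itv /=.
- exfalso; apply: (@med_c (2 * c - m)); first lra.
  have -> : X @^-1` `]-oo, (2 * c - m)%R] = X @^-1` (refl c @^-1` `[m, +oo[).
    apply/seteqP; split => w /=; rewrite !in_itv /= ?andbT /refl => ?; lra.
  rewrite -PX_refl; last exact: measurable_itv.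
  suff <- : [set w | m <= X w] = X @^-1` `[m, +oo[ by [].
  by apply/seteqP; split => w /=; rewrite in_itv /= andbT.
Qed.

Lemma final a s : 0 <= s -> s < a ->
  ((2:R)^-1%:E <= P (X @^-1` `[(c - s)%R, (c + s)%R]))%E ->
  ((2:R)^-1%:E <= P [set w | (a <= `|X w - c|)%R])%E -> False.
Proof.
move=> s0 sa hA hC0.
pose C : set R := `]-oo, (c - a)%R] `|` `[(c + a)%R, +oo[.
have mC : measurable C by apply: measurableU; exact: measurable_itv.
have hC : ((2:R)^-1%:E <= P (X @^-1` C))%E.
  suff <- : [set w | (a <= `|X w - c|)%R] = X @^-1` C by [].
  apply/seteqP; split => w /=.
    by rewrite ler_normr => /orP[?|?]; [right|left]; rewrite /= in_itv /= ?andbT; lra.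
  by case; rewrite /= in_itv /= ?andbT => ?; rewrite ler_normr; apply/orP; [right|left]; lra.
have hB : (P (X @^-1` `](c + s)%R, (c + a)%R[) <= 0)%E.
  apply: (@three _ _ _ P _ _ _ (measurable_funPTI X (measurable_itv _))
    (measurable_funPTI X (measurable_itv _))
    (measurable_funPTI X mC) _ _ hA hC).
  - rewrite -preimage_setI -subset0 => w [] /=; rewrite !in_itv /= => /andP[? ?] /andP[? ?]; lra.
  - rewrite -preimage_setU -preimage_setI -subset0 => w [] /= [];
      rewrite !in_itv /= ?andbT => /andP[? ?] []; rewrite /= in_itv /= ?andbT; lra.
have fm0 : f (c + a) <= 0.
  have := @PX_lo `](c + s)%R, (c + a)%R[ (f (c + a)) (measurable_itv _) (f0 _).
  have /[swap]/[apply] : forall x, `](c + s)%R, (c + a)%R[%classic x -> f (c + a) <= f x.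
    by move=> x /=; rewrite in_itv /= => /andP[? ?]; apply: fdn; lra.
  move=> h; have := le_trans h hB.
  rewrite lam_eq; last lra.
  rewrite -EFinM lee_fin => h2.
  have : 0 < c + a - (c + s) by lra.
  move=> hp; nra.
have fm : f (c + a) = 0 by apply/le_anti; rewrite fm0 f0.
have := @PX_up C (f (c + a)) mC (f0 _).
have /[swap]/[apply] : forall x, C x -> f x <= f (c + a).
  move=> x [] /=; rewrite in_itv /= ?andbT => ?.
    rewrite fsym; apply: fup; lra.
  apply: fdn; lra.
rewrite fm mul0e => h.
have := le_trans hC h; rewrite lee_fin; lra.
Qed.

Variable Y : {RV P >-> R}.
Hypothesis hind : indep_rv P X Y.

Lemma zbound m2 b e : 0 <= b -> 0 < e ->
  (P [set w | (`|X w + Y w - m2| <= b)%R] <=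
   P (X @^-1` `[(c - (b + e / 2))%R, (c + (b + e / 2))%R]))%E.
Proof.
move=> b0 e0.
set s := b + e / 2.
set q := P (X @^-1` `[(c - s)%R, (c + s)%R]).
pose Cn n := [set y | cellN e y = n].
pose An n : set R :=
  `[(m2 - b - (cell_lo e n + e))%R, (m2 - b - (cell_lo e n + e) + 2 * s)%R]%classic.
pose F n := X @^-1` An n `&` Y @^-1` Cn n.
have mCn n : measurable (Cn n) := cell_meas e0 n.
have mAn n : measurable (An n) := measurable_itv _.
have mF n : measurable (F n).
  by apply: measurableI; [exact: measurable_funPTI (mAn n)|exact: measurable_funPTI (mCn n)].
have mE : measurable [set w | (`|X w + Y w - m2| <= b)%R].
  have -> : [set w | (`|X w + Y w - m2| <= b)%R] =
      (fun w => X w + Y w) @^-1` `[(m2 - b)%R, (m2 + b)%R].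
    apply/seteqP; split => w /=; rewrite in_itv /= ler_norml => /andP[? ?];
      apply/andP; split; lra.
  have mXY : measurable_fun setT (fun w => X w + Y w).
    by apply: measurable_realfun.measurable_funD; exact: measurable_funP.
  rewrite -[X in measurable X]setTI; exact: (mXY measurableT _ (measurable_itv _)).
have sub : [set w | (`|X w + Y w - m2| <= b)%R] `<=` \bigcup_n F n.
  move=> w /= hw; exists (cellN e (Y w)) => //; split => //=.
  have := cell_bnd e0 (Y w); set n := cellN e (Y w) => /andP[h1 h2].
  move: hw; rewrite ler_norml => /andP[h3 h4]; rewrite /An /s /= in_itv /=; apply/andP; split; lra.
apply: (le_trans (measure_sigma_subadditive P mF mE sub)).
have fq : q \is a fin_num := fin_num_measure P _ (measurable_funPTI X (measurable_itv _)).
apply: (@le_trans _ _ (\sum_(0 <= n <oo) ((fine q)%:E * P (Y @^-1` Cn n)))%E).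
  apply: lee_nneseries.
    by move=> n _ _; exact: measure_ge0.
  move=> n _; apply: (@le_trans _ _ (P (X @^-1` An n) * P (Y @^-1` Cn n))%E).
    by rewrite le_eqVlt; apply/orP; left; apply/eqP; exact: hind.
  apply: lee_wpmul2r; first exact: measure_ge0.
  rewrite fineK // /q /An; apply: anderson; rewrite /s; lra.
rewrite nneseriesZl; last by move=> n _; exact: measure_ge0.
apply: (@le_trans _ _ ((fine q)%:E * 1)%E); last by rewrite mule1 fineK.
apply: lee_wpmul2l; first by rewrite lee_fin fine_ge0 // measure_ge0.
have mYC n : measurable (Y @^-1` Cn n) by exact: measurable_funPTI.
have tC : trivIset setT (fun n => Y @^-1` Cn n).
  apply/trivIsetP => i j _ _ ij; rewrite -preimage_setI.
  apply/seteqP; split => // w [/= ha hb]; by move: ij; rewrite -ha -hb eqxx.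
have := measure_bigcup P setT (fun n => Y @^-1` Cn n) (fun n _ => mYC n) tC.
rewrite (eq_eseriesl _ (Q := xpredT)); last by move=> i; rewrite in_setT.
move=> <-; apply: probability_le1.
by apply: bigcupT_measurable.
Qed.

Lemma main_sec a b : is_MAD P X a -> is_MAD P (fun w => X w + Y w) b -> a <= b.
Proof.
case=> m1 [hm1 [_ ha]]; case=> m2 [_ [hb _]].
have e1 := median_c m1 hm1; subst m1.
rewrite /= in hb.
have b0 : 0 <= b.
  rewrite leNgt; apply/negP => b0.
  have e0 : [set w | (`|X w + Y w - m2| <= b)%R] = set0.
    apply/seteqP; split => // w /= h.
    by have := normr_ge0 (X w + Y w - m2); lra.
  by move: hb; rewrite e0 measure0 lee_fin; lra.
rewrite leNgt; apply/negP => ba.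
have e0 : 0 < a - b by lra.
have hz := zbound m2 b (a - b) b0 e0.
have hA := le_trans hb hz.
apply: (@final a (b + (a - b) / 2)) => //; lra.
Qed.

End dens.


Theorem lemma15 (d : measure_display) (T : measurableType d) (R : realType)
  (P : probability T R) (X Y : {RV P >-> R}) (f : R -> R) :
  indep_rv P X Y ->
  has_density P X f -> symmetric_unimodal f ->
  forall a b : R,
    is_MAD P X a -> is_MAD P (fun w => X w + Y w) b -> a <= b.
Proof.
move=> hind [f0 [mf hd]] [c [fsym [fup fdn]]] a b ha hb.
exact: (@main_sec d T R P X f c f0 mf hd fsym fup fdn Y hind a b ha hb).
Qed.
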